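(* There exists a family of streaming stochastic multi-armed bandit instances such that for any parameters $T$ and $K$ with $T\geq K$, every single-pass streaming algorithm with a memory of $\frac{K}{20}$ arms suffers total expected regret \[\mathbb{E}[R_T]\geq C\cdot K^{1/3}\cdot T^{2/3}\] for some (absolute) constant $C>0$. Furthermore, the lower bound holds even when the order of arrival of the arms is uniformly at random.
   Context: Single-pass streaming multi-armed bandits: there are $K$ arms, each with an unknown reward distribution (supported on $[0,1]$) with mean $\mu_i$; $\mu^*=\max_i\mu_i$. The arms arrive one by one in a stream (in an adversarially chosen order unless stated otherwise). The algorithm may only pull arms currently stored in its memory (including the arm currently being read); once an arm is not stored or is discarded from memory, it can never be retrieved again. A memory of $m$ arms means at most $m$ arms are stored at any time. The algorithm performs a total of $T$ arm pulls (trials). If $a_1,\dots,a_T$ are the arms pulled, the regret is $R_T=T\mu^*-\sum_{s=1}^T\mu_{a_s}$, and the expected regret is its expectation over the randomness of the rewards, the algorithm, and the instance. *)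

(* Defs.v *)
From HB Require Import structures.
From mathcomp Require Import all_boot all_order all_algebra all_fingroup.
From mathcomp Require Import reals exp Rstruct.
Set Implicit Arguments. Unset Strict Implicit. Unset Printing Implicit Defensive.
Import Order.TTheory GRing.Theory Num.Theory.
Local Open Scope ring_scope.

Notation R := Rdefinitions.R.

(* Reward distributions: finitely supported laws on [0,1], given as a  *)
(* list of (probability, reward value) pairs.                          *)
Definition rdist := seq (R * R).

Definition is_rdist (d : rdist) : Prop :=
  (forall pv, pv \in d -> 0 <= pv.1 /\ 0 <= pv.2 <= 1) /\
  \sum_(pv <- d) pv.1 = 1.

Definition rmean (d : rdist) : R := \sum_(pv <- d) pv.1 * pv.2.

Definition instance (K : nat) := {ffun 'I_K -> rdist}.

Definition is_instance (K : nat) (nu : instance K) : Prop :=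
  forall i, is_rdist (nu i).

(* mu^* = max_i mu_i (means are >= 0, so 0 is a neutral start). *)
Definition best_mean (K : nat) (nu : instance K) : R :=
  \big[Num.max/0]_(i < K) rmean (nu i).

(* A (finitely supported) random instance: list of (weight, instance). *)
Notation instance_dist K := (seq (R * instance K)).

Definition is_instance_dist (K : nat) (D : instance_dist K) : Prop :=
  (forall wn, wn \in D -> 0 <= wn.1 /\ is_instance wn.2) /\
  \sum_(wn <- D) wn.1 = 1.

(* Streaming protocol.  Arms are identified by their arrival position  *)
(* in the stream ('I_K).  Before each pull the algorithm makes a        *)
(* decision (p, A, j):                                                  *)
(*   p : number of arms read from the stream so far (p-1 = arm being    *)
(*       currently read),                                               *)
(*   A : the set of arms available (stored arms together with the arm   *)
(*       currently read),                                               *)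
(*   j : the arm pulled in this round, j \in A.                         *)
(* Reading several arms between two pulls is a single decision (no      *)
(* information arrives in between).                                     *)
Definition decision (K : nat) := ('I_K.+1 * {set 'I_K} * 'I_K)%type.
Definition dpos (K : nat) (d : decision K) : nat := d.1.1.
Definition dmem (K : nat) (d : decision K) : {set 'I_K} := d.1.2.
Definition dpull (K : nat) (d : decision K) : 'I_K := d.2.

(* Legal transition from state (p0, A0) with memory m:                  *)
(*  - new available arms are old available ones or newly read ones      *)
(*    (a discarded arm can never come back);                            *)
(*  - the currently read arm p-1 is available, and besides it at most   *)
(*    m arms are stored;                                                *)
Definition valid_step (K m : nat) (p0 : nat) (A0 : {set 'I_K})
    (d : decision K) : bool :=
  let p := dpos d in let A := dmem d in
  [&& (p0 <= p)%N, (0 < p)%N,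
      [forall x : 'I_K, (x \in A) ==>
          ((x \in A0) || ((p0 <= x)%N && (x < p)%N))],
      [exists x in A, (x : nat).+1 == p],
      (#|A| <= m.+1)%N &
      dpull d \in A].

(* Histories: decisions together with observed rewards, oldest first. *)
Definition history (K : nat) := seq (decision K * R).

Fixpoint valid_hist_from (K m : nat) (p0 : nat) (A0 : {set 'I_K})
    (h : history K) : bool :=
  match h with
  | [::] => true
  | (d, _) :: h' => valid_step m p0 A0 d && valid_hist_from m (dpos d) (dmem d) h'
  end.

Definition valid_hist (K m : nat) (h : history K) : bool :=
  valid_hist_from m 0 set0 h.

Definition state_after (K : nat) (h : history K) : nat * {set 'I_K} :=
  match rev h with
  | [::] => (0%N, set0)
  | (d, _) :: _ => (dpos d, dmem d)
  end.

(* A (randomized) algorithm, as a behavioural strategy: given the full  *)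
(* history, a probability distribution on the next decision.            *)
Definition policy (K : nat) := history K -> decision K -> R.

Definition streaming_alg (K m : nat) (pol : policy K) : Prop :=
  (forall h d, 0 <= pol h d) /\
  (forall h, \sum_(d : decision K) pol h d = 1) /\
  (forall h d, valid_hist m h -> 0 < pol h d ->
     valid_step m (state_after h).1 (state_after h).2 d).

(* Expected regret over the next n pulls, from history h, when the arm  *)
(* at stream position i has reward law nu i, and mu^* = mus.            *)
Fixpoint exp_regret_from (K : nat) (pol : policy K) (nu : 'I_K -> rdist)
    (mus : R) (n : nat) (h : history K) : R :=
  match n with
  | 0%N => 0
  | n'.+1 =>
      \sum_(d : decision K) pol h d *
        ((mus - rmean (nu (dpull d))) +
         \sum_(pv <- nu (dpull d)) pv.1 *
             exp_regret_from pol nu mus n' (rcons h (d, pv.2)))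
  end.

(* E[R_T] for instance nu whose arms arrive in order s                  *)
(* (position i carries arm s i).                                        *)
Definition exp_regret_order (K : nat) (pol : policy K) (nu : instance K)
    (s : {perm 'I_K}) (T : nat) : R :=
  exp_regret_from pol (fun i => nu (s i)) (best_mean nu) T [::].

Definition regret_fixed_order (K : nat) (pol : policy K) (D : instance_dist K)
    (s : {perm 'I_K}) (T : nat) : R :=
  \sum_(wn <- D) wn.1 * exp_regret_order pol wn.2 s T.

Definition regret_random_order (K : nat) (pol : policy K) (D : instance_dist K)
    (T : nat) : R :=
  \sum_(wn <- D) wn.1 *
    (#|{perm 'I_K}|%:R^-1 * \sum_(s : {perm 'I_K}) exp_regret_order pol wn.2 s T).

(* Main.v *)
Require Import Defs.
From HB Require Import structures.
From mathcomp Require Import all_boot all_order all_algebra all_fingroup.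
From mathcomp Require Import reals exp Rstruct.
From mathcomp Require Import sequences exp.
From mathcomp Require Import ring lra.
Set Implicit Arguments. Unset Strict Implicit. Unset Printing Implicit Defensive.
Import Order.TTheory GRing.Theory Num.Theory.
Local Open Scope ring_scope.


Definition Ber (p : R) : rdist := [:: (p, 1); (1 - p, 0)].

Lemma rmean_Ber p : rmean (Ber p) = p.
Proof. by rewrite /rmean /Ber !big_cons big_nil /=; ring. Qed.

Lemma sum_Ber p (F : R -> R) :
  \sum_(pv <- Ber p) pv.1 * F pv.2 = p * F 1 + (1 - p) * F 0.
Proof. by rewrite /Ber !big_cons big_nil /= addr0. Qed.

Section WDef.
Variable K : nat.
Implicit Types (pol : policy K) (th : 'I_K -> R) (h : history K).

Fixpoint Wt pol th (f : history K -> R) n h : R :=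
  match n with
  | 0 => f h
  | n'.+1 => \sum_(d : decision K) pol h d *
       (th (dpull d) * Wt pol th f n' (rcons h (d, 1)) +
        (1 - th (dpull d)) * Wt pol th f n' (rcons h (d, 0)))
  end.

Lemma regret_W pol th mus n h :
  (forall h, \sum_(d : decision K) pol h d = 1) ->
  exp_regret_from pol (fun i => Ber (th i)) mus n h +
    \sum_(x <- h) (mus - th (dpull x.1)) =
  Wt pol th (fun h' => \sum_(x <- h') (mus - th (dpull x.1))) n h.
Proof.
move=> hs; elim: n h => [|n IH] h /=; first by rewrite add0r.
rewrite (_ : \sum_(x <- h) _ = \sum_d pol h d * \sum_(x <- h) (mus - th (dpull x.1))); last by rewrite -mulr_suml hs mul1r.
rewrite -big_split.
apply: eq_bigr => d _.
rewrite rmean_Ber (sum_Ber _ (fun r => exp_regret_from _ _ _ _ (rcons h (d, r)))).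
rewrite -!IH !big_rcons /=.
ring.
Qed.

Lemma Wt_lin pol th (f g : history K -> R) a b n h :
  Wt pol th (fun h' => a * f h' + b * g h') n h =
  a * Wt pol th f n h + b * Wt pol th g n h.
Proof.
elim: n h => [|n IH] h //=.
rewrite !mulr_sumr -big_split /=; apply: eq_bigr => d _.
rewrite !IH; ring.
Qed.

Lemma Wt_const pol th c n h :
  (forall h, \sum_(d : decision K) pol h d = 1) ->
  Wt pol th (fun _ => c) n h = c.
Proof.
move=> hs; elim: n h => [|n IH] h //=.
under eq_bigr => d _ do rewrite !IH.
transitivity (\sum_d pol h d * c); last by rewrite -mulr_suml hs mul1r.
apply: eq_bigr => d _; ring.
Qed.

Lemma Wt_mono (Inv : history K -> Prop) pol th (f1 f2 : history K -> R) n h :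
  (forall h d, 0 <= pol h d) -> (forall i, 0 <= th i <= 1) ->
  (forall h d r, Inv h -> 0 < pol h d -> Inv (rcons h (d, r))) ->
  Inv h ->
  (forall e, size e = n -> Inv (h ++ e) -> f1 (h ++ e) <= f2 (h ++ e)) ->
  Wt pol th f1 n h <= Wt pol th f2 n h.
Proof.
move=> p0 th01 pres; elim: n h => [|n IH] h Ih hf /=.
  by have := hf [::] erefl; rewrite cats0; apply.
apply: ler_sum => d _.
have := p0 h d; rewrite le_eqVlt => /orP [/eqP <-|pos]; first by rewrite !mul0r.
have [t0 t1] := andP (th01 (dpull d)).
apply: ler_wpM2l; first exact: p0.
have step : forall r, Wt pol th f1 n (rcons h (d, r)) <= Wt pol th f2 n (rcons h (d, r)).
  move=> r; apply: IH; first exact: pres.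
  by move=> e se; rewrite cat_rcons; apply: hf; rewrite /= se.
apply: lerD; apply: ler_wpM2l => //; by rewrite subr_ge0.
Qed.

Lemma Wt_zero pol th (f : history K -> R) n h :
  (forall e, size e = n -> f (h ++ e) = 0) -> Wt pol th f n h = 0.
Proof.
elim: n h => [|n IH] h hf /=; first by have := hf [::] erefl; rewrite cats0.
apply: big1 => d _.
rewrite !IH ?mulr0 ?addr0 ?mulr0 //; by move=> e se; rewrite cat_rcons hf //= se.
Qed.

Lemma Wt_nonneg pol th (f : history K -> R) n h :
  (forall h d, 0 <= pol h d) -> (forall i, 0 <= th i <= 1) ->
  (forall h', 0 <= f h') -> 0 <= Wt pol th f n h.
Proof.
move=> p0 th01 f0.
rewrite -(@Wt_zero pol th (fun _ => 0) n h) //.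
apply: (@Wt_mono (fun _ => True)) => //.
Qed.

End WDef.

Section Valid.
Variables K m : nat.
Implicit Types (h e : history K).

Definition last_state p0 (A0 : {set 'I_K}) h : nat * {set 'I_K} :=
  foldl (fun s (x : decision K * R) => (dpos x.1, dmem x.1)) (p0, A0) h.

Lemma state_after_last h : state_after h = last_state 0 set0 h.
Proof.
case/lastP: h => [|h x] //.
by rewrite /state_after rev_rcons /last_state foldl_rcons; case: x.
Qed.

Lemma valid_cat p0 (A0 : {set 'I_K}) h e :
  valid_hist_from m p0 A0 (h ++ e) =
  valid_hist_from m p0 A0 h &&
  valid_hist_from m (last_state p0 A0 h).1 (last_state p0 A0 h).2 e.
Proof.
elim: h p0 A0 => [|[d r] h IH] p0 A0 //=.
by rewrite IH andbA.
Qed.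

Lemma valid_rcons p0 (A0 : {set 'I_K}) h d r :
  valid_hist_from m p0 A0 (rcons h (d, r)) =
  valid_hist_from m p0 A0 h &&
  valid_step m (last_state p0 A0 h).1 (last_state p0 A0 h).2 d.
Proof. by rewrite -cats1 valid_cat /= andbT. Qed.

Lemma valid_pres pol h d r :
  streaming_alg m pol -> valid_hist m h -> 0 < pol h d ->
  valid_hist m (rcons h (d, r)).
Proof.
move=> [_ [_ hv]] vh pos.
have := hv h d vh pos; rewrite state_after_last => hs.
by rewrite /valid_hist valid_rcons; apply/andP; split.
Qed.

Lemma valid_inv p0 (A0 : {set 'I_K}) h :
  valid_hist_from m p0 A0 h -> (forall y, y \in A0 -> (y < p0)%N) ->
  forall x, x \in h ->
    [/\ forall y, y \in dmem x.1 -> (y < dpos x.1)%N,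
        dpull x.1 \in dmem x.1 & (p0 <= dpos x.1)%N].
Proof.
elim: h p0 A0 => [|[d r] h IH] p0 A0 //=.
move=> /andP [vs vh] hA x.
case/and5P: vs => le0 pos hf _ /andP [_ hpull].
have hd : forall y, y \in dmem d -> (y < dpos d)%N.
  move=> y yA; have := forallP hf y; rewrite yA /= => /orP [/hA|/andP [_ ->]] //.
  by move=> lt; apply: leq_trans lt le0.
rewrite inE => /orP [/eqP -> /=|xh]; first by split.
have [a b c] := IH _ _ vh hd x xh; split => //.
exact: leq_trans le0 c.
Qed.

Lemma valid_inv0 h :
  valid_hist m h -> forall x, x \in h ->
    [/\ forall y, y \in dmem x.1 -> (y < dpos x.1)%N,
        dpull x.1 \in dmem x.1 & (0 <= dpos x.1)%N].
Proof. move=> vh; apply: (valid_inv vh) => y; by rewrite inE. Qed.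

End Valid.


Section Comb.
Variables K m H : nat.
Implicit Types (h e : history K).

Definition cnt (P : decision K -> bool) h : R :=
  \sum_(x <- h) (if P x.1 then 1 else 0).

Lemma cnt_ge0 P h : 0 <= cnt P h.
Proof. by apply: sumr_ge0 => x _; case: ifP. Qed.

Lemma cnt_cat P h e : cnt P (h ++ e) = cnt P h + cnt P e.
Proof. by rewrite /cnt big_cat. Qed.

Definition late (j : 'I_K) h :=
  has (fun x : decision K * R => (H < dpos x.1)%N && (j \in dmem x.1)) h.

Definition inB (j : 'I_K) h := late j h || (j \in (state_after h).2).

Lemma late_sub p0 (A0 : {set 'I_K}) h (j : 'I_K) :
  valid_hist_from m p0 A0 h -> (H < p0)%N -> (j < H)%N ->
  late j h || (j \in (last_state p0 A0 h).2) -> j \in A0.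
Proof.
elim: h p0 A0 => [|[d r] h IH] p0 A0 /=; first by move=> _ _ _.
move=> /andP [vs vh] Hp jH.
case/and5P: vs => le0 _ hf _ _.
have jd : j \in dmem d -> j \in A0.
  move=> jA; have := forallP hf j; rewrite jA /= => /orP [//|/andP [pj _]].
  have : (p0 < H)%N by apply: leq_ltn_trans pj jH.
  by rewrite ltnNge (ltnW Hp).
rewrite -orbA => /orP [/andP [_ /jd] //|hj].
apply: jd; apply: (IH _ _ vh) => //.
exact: leq_trans Hp le0.
Qed.

Lemma count_B_gen p0 (A0 : {set 'I_K}) h :
  valid_hist_from m p0 A0 h -> h != [::] ->
  (#|[set j : 'I_K | (j < H)%N && (late j h || (j \in (last_state p0 A0 h).2))]|
     <= m.+1)%N.
Proof.
elim: h p0 A0 => [|[d r] h IH] p0 A0 //= /andP [vs vh] _.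
have cardd : (#|dmem d| <= m.+1)%N by case/and5P: vs => _ _ _ _ /andP [].
have [Hd|Hd] := boolP ((H < dpos d)%N || (h == [::])).
  apply: leq_trans cardd; apply: subset_leq_card; apply/subsetP => j.
  rewrite inE => /andP [jH].
  case/orP: Hd => [Hd|/eqP hnil].
    rewrite Hd /= -orbA => /orP [//|hj].
    by apply: (late_sub vh Hd jH).
  by rewrite hnil /=; case/orP => [/orP [/andP [_ ->] | //] | //].
rewrite negb_or in Hd; case/andP: Hd => Hd hn.
rewrite (negbTE Hd) /=.
exact: IH.
Qed.

Lemma count_B h : valid_hist m h -> h != [::] ->
  (#|[set j : 'I_K | (j < H)%N && inB j h]| <= m.+1)%N.
Proof. by move=> vh hn; rewrite /inB state_after_last; apply: count_B_gen. Qed.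

Definition Nj (j : 'I_K) h := cnt (fun d => dpull d == j) h.
Definition Npj (j : 'I_K) h := cnt (fun d => (dpos d <= H)%N && (dpull d == j)) h.
Definition sigma h := cnt (fun d => (dpos d <= H)%N) h.
Definition tau (k : nat) h := cnt (fun d => (dpos d <= k)%N) h.

Lemma Nj_eq (j : 'I_K) h : valid_hist m h -> ~~ late j h -> Nj j h = Npj j h.
Proof.
move=> vh hl; rewrite /Nj /Npj /cnt; apply: eq_big_seq => x xh.
case: (dpull x.1 =P j) => [pj|]; last by rewrite andbF.
rewrite andbT; case: leqP => // Hx.
have [_ pin _] := valid_inv0 vh xh.
by case/negP: hl; apply/hasP; exists x => //; rewrite Hx -pj pin.
Qed.

Lemma sum_Npj h : \sum_(j < K) Npj j h = sigma h.
Proof.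
rewrite /Npj /sigma /cnt exchange_big /=; apply: eq_bigr => x _.
case: ifP => hx /=; last by apply: big1 => j _.
rewrite (bigD1 (dpull x.1)) //= eqxx big1 ?addr0 // => j /negbTE.
by rewrite eq_sym => ->.
Qed.

Lemma sum_ind_ge (a n : nat) :
  \sum_(k < n) (if (a <= k)%N then 1 else 0 : R) = (n - a)%:R.
Proof.
elim: n => [|n IH]; first by rewrite big_ord0 sub0n.
rewrite big_ord_recr /= IH.
case: (leqP a n) => an.
  by rewrite (subSn an) -natr1.
have e1 : (n - a = 0)%N by apply/eqP; rewrite subn_eq0 ltnW.
have e2 : (n.+1 - a = 0)%N by apply/eqP; rewrite subn_eq0.
by rewrite e1 e2 addr0.
Qed.

Lemma sum_tau h : (H <= K)%N ->
  (K - H)%:R * sigma h <= \sum_(k < K) tau k h.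
Proof.
move=> HK; rewrite /tau /sigma /cnt exchange_big /= mulr_sumr.
apply: ler_sum => x _.
case: ifP => hx; last by rewrite mulr0; apply: sumr_ge0 => k _; case: ifP.
rewrite mulr1 -sum_ind_ge; apply: ler_sum => k _.
case: (leqP H k) => Hk; first by rewrite (leq_trans hx Hk).
by case: ifP.
Qed.

Definition Find (L : R) (j : 'I_K) h : R :=
  if (~~ inB j h) && (Npj j h < L) && (Nj j h < L) then 1 else 0.

Lemma Find_sum (L : R) h : 0 < L -> valid_hist m h -> h != [::] ->
  \sum_(j < K | (j < H)%N) (1 - Find L j h) <= m.+1%:R + sigma h / L.
Proof.
move=> L0 vh hn.
apply: (@le_trans _ _ (\sum_(j < K | (j < H)%N)
   ((if inB j h then 1 else 0) + Npj j h / L))).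
  apply: ler_sum => j _; rewrite /Find.
  have N0 : 0 <= Npj j h / L by rewrite divr_ge0 ?cnt_ge0 ?ltW.
  case: (boolP (inB j h)) => ib /=.
    by rewrite subr0 lerDl.
  rewrite add0r; case: (ltP (Npj j h) L) => nL /=.
    rewrite Nj_eq //; last by move: ib; rewrite /inB negb_or => /andP [].
    by rewrite nL subrr.
  by rewrite subr0 ler_pdivlMr // mul1r.
rewrite big_split /=; apply: lerD.
  rewrite -big_mkcondr /= sumr_const.
  apply: (@le_trans _ _ (#|[set j : 'I_K | (j < H)%N && inB j h]|%:R)).
    by rewrite cardsE.
  by rewrite ler_nat; apply: count_B.
rewrite -mulr_suml; apply: ler_wpM2r; first by rewrite invr_ge0 ltW.
rewrite -sum_Npj [X in _ <= X](bigID (fun j : 'I_K => (j < H)%N)) /= lerDl.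
by apply: sumr_ge0 => j _; apply: cnt_ge0.
Qed.

End Comb.


Section Stop.
Variable K : nat.
Implicit Types (h e : history K) (pol : policy K).

Definition th0 : 'I_K -> R := fun _ => 1 / 2.
Definition thj (j : 'I_K) (eps : R) : 'I_K -> R :=
  fun i => if i == j then 1 / 2 + eps else 1 / 2.

Definition lr (j : 'I_K) (eps : R) (x : decision K * R) : R :=
  if dpull x.1 == j then (if x.2 == 1 then ln (1 + 2 * eps) else ln (1 - 2 * eps))
  else 0.

Definition ell j eps h := \sum_(x <- h) lr j eps x.

Lemma ell_rcons j eps h x : ell j eps (rcons h x) = ell j eps h + lr j eps x.
Proof. by rewrite /ell big_rcons. Qed.

Lemma com pol j eps (f : history K -> R) n h :
  0 < eps < 1 / 2 ->
  expR (ell j eps h) * Wt pol (thj j eps) f n h =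
  Wt pol th0 (fun h' => f h' * expR (ell j eps h')) n h.
Proof.
move=> /andP [e0 e1].
have p1 : 0 < 1 + 2 * eps by lra.
have p2 : 0 < 1 - 2 * eps by lra.
elim: n h => [|n IH] h /=; first by rewrite mulrC.
rewrite mulr_sumr; apply: eq_bigr => d _.
rewrite -!IH !ell_rcons !expRD /lr /= /thj /th0.
have n01 : ((0 : R) == 1) = false by rewrite eq_sym oner_eq0.
case: (dpull d == j); rewrite ?eqxx ?n01 ?expR0.
  by rewrite !lnK ?posrE //; field.
by field.
Qed.

Definition pstop pol (j : 'I_K) (L : R) (d0 : decision K) : policy K :=
  fun h d => if Nj j h < L then pol h d else (d == d0)%:R.

Lemma pstop_ge0 pol j L d0 : (forall h d, 0 <= pol h d) ->
  forall h d, 0 <= pstop pol j L d0 h d.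
Proof. by move=> p0 h d; rewrite /pstop; case: ifP => // _; rewrite ler0n. Qed.

Lemma pstop_sum pol j L d0 : (forall h, \sum_(d : decision K) pol h d = 1) ->
  forall h, \sum_(d : decision K) pstop pol j L d0 h d = 1.
Proof.
move=> ps h; rewrite /pstop; case: (boolP (Nj j h < L)) => hL.
  transitivity (\sum_(d : decision K) pol h d); last exact: ps.
  by apply: eq_bigr.
rewrite (bigD1 d0) //= eqxx.
rewrite big1 ?addr0 //.
by move=> d /negbTE ->.
Qed.

Lemma Nj_cat j h e : Nj j h <= Nj j (h ++ e).
Proof. by rewrite /Nj cnt_cat lerDl cnt_ge0. Qed.

Lemma stop_eq pol th j L d0 (f : history K -> R) n h :
  (forall h', f h' != 0 -> Nj j h' < L) ->
  Wt pol th f n h = Wt (pstop pol j L d0) th f n h.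
Proof.
move=> hf; elim: n h => [|n IH] h //.
case: (ltP (Nj j h) L) => hL.
  rewrite /=; apply: eq_bigr => d _; by rewrite /pstop hL !IH.
have z : forall e, size e = n.+1 -> f (h ++ e) = 0.
  move=> e _; apply/eqP; apply: contraT => /hf.
  have := Nj_cat j h e; lra.
by rewrite !Wt_zero.
Qed.

Lemma kl_step pol j eps L d0 n h :
  dpull d0 != j -> 0 < eps < 1 / 2 ->
  (forall h d, 0 <= pol h d) -> (forall h, \sum_(d : decision K) pol h d = 1) ->
  ln (1 + 2 * eps) + ln (1 - 2 * eps) >= - 6 * eps ^+ 2 ->
  Nj j h < L + 1 ->
  ell j eps h - 3 * eps ^+ 2 * (L + 1 - Nj j h) <=
  Wt (pstop pol j L d0) th0 (ell j eps) n h.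
Proof.
move=> dj /andP [e0 e1] p0 ps hkl.
have ps' := @pstop_sum pol j L d0 ps; have p0' := @pstop_ge0 pol j L d0 p0.
elim: n h => [|n IH] h hN /=.
  have : 0 <= 3 * eps ^+ 2 * (L + 1 - Nj j h).
    by apply: mulr_ge0; [rewrite mulr_ge0 // sqr_ge0 | lra].
  lra.
set c := ell j eps h - 3 * eps ^+ 2 * (L + 1 - Nj j h).
apply: (@le_trans _ _ (\sum_(d : decision K) pstop pol j L d0 h d * c)).
  by rewrite -mulr_suml ps' mul1r.
apply: ler_sum => d _.
have := p0' h d; rewrite le_eqVlt => /orP [/eqP <-|pos]; first by rewrite !mul0r.
apply: ler_wpM2l; first exact: ltW.
have hNr : forall r, Nj j (rcons h (d, r)) = Nj j h + (if dpull d == j then 1 else 0).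
  by move=> r; rewrite /Nj /cnt big_rcons.
case: (boolP (dpull d == j)) => dj'.
  have hl : Nj j h < L.
    move: pos; rewrite /pstop; case: (ltP (Nj j h) L) => // _.
    case: (d =P d0) => [ed|]; last by rewrite ltr0n.
    by move: dj; rewrite -ed dj'.
  have IH1 := IH (rcons h (d, 1)); have IH0 := IH (rcons h (d, 0)).
  rewrite !hNr dj' !ell_rcons /lr dj' /= eqxx in IH1 IH0.
  have n01 : ((0 : R) == 1) = false by rewrite eq_sym oner_eq0.
  rewrite n01 in IH0.
  have := IH1 ltac:(lra); have := IH0 ltac:(lra).
  rewrite /th0 /c; move: hkl; nra.
have IH1 := IH (rcons h (d, 1)); have IH0 := IH (rcons h (d, 0)).
rewrite !hNr (negbTE dj') !ell_rcons /lr (negbTE dj') !addr0 in IH1 IH0.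
have := IH1 hN; have := IH0 hN.
rewrite /th0 /c; nra.
Qed.

End Stop.


Section More.
Variable K : nat.
Implicit Types (h e : history K) (pol : policy K).

Lemma Wt_ext pol th (f g : history K -> R) n h :
  (forall h', f h' = g h') -> Wt pol th f n h = Wt pol th g n h.
Proof.
move=> fg; elim: n h => [|n IH] h /=; first exact: fg.
by apply: eq_bigr => d _; rewrite !IH.
Qed.

Lemma Wt_scale pol th (f : history K -> R) c n h :
  Wt pol th (fun h' => c * f h') n h = c * Wt pol th f n h.
Proof.
rewrite (@Wt_ext _ _ _ (fun h' => c * f h' + 0 * f h')); last by move=> h'; rewrite mul0r addr0.
by rewrite Wt_lin mul0r addr0.
Qed.

Lemma Wt_add pol th (f g : history K -> R) n h :
  Wt pol th (fun h' => f h' + g h') n h = Wt pol th f n h + Wt pol th g n h.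
Proof.
rewrite (@Wt_ext _ _ _ (fun h' => 1 * f h' + 1 * g h')); last by move=> h'; rewrite !mul1r.
by rewrite Wt_lin !mul1r.
Qed.

Lemma Wt_sum (I : finType) (P : pred I) pol th (F : I -> history K -> R) n h :
  Wt pol th (fun h' => \sum_(i | P i) F i h') n h = \sum_(i | P i) Wt pol th (F i) n h.
Proof.
elim: n h => [|n IH] h; first by [].
rewrite [LHS]/=.
under eq_bigr => d _ do rewrite !IH.
rewrite exchange_big /=; apply: eq_bigr => d _.
by rewrite !mulr_sumr -big_split /= mulr_sumr.
Qed.

Lemma Wt_eq_on (Inv : history K -> Prop) pol th (f1 f2 : history K -> R) n h :
  (forall h d, 0 <= pol h d) -> (forall i, 0 <= th i <= 1) ->
  (forall h d r, Inv h -> 0 < pol h d -> Inv (rcons h (d, r))) ->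
  Inv h ->
  (forall e, size e = n -> Inv (h ++ e) -> f1 (h ++ e) = f2 (h ++ e)) ->
  Wt pol th f1 n h = Wt pol th f2 n h.
Proof.
move=> p0 t01 pres Ih hf; apply/eqP; rewrite eq_le.
by apply/andP; split; apply: (Wt_mono p0 t01 pres Ih) => e se ie; rewrite hf.
Qed.

Lemma expR_half_le2 : expR (1 / 2 : R) <= 2.
Proof.
have h1 : 1 + (- (1/2)) <= expR (- (1 / 2 : R)) by apply: expR_ge1Dx.
have h2 := expRxMexpNx_1 (1 / 2 : R).
have h3 := expR_gt0 (- (1/2 : R)).
have h4 := expR_gt0 (1/2 : R).
nra.
Qed.

Lemma com_ineq pol j eps (F : history K -> R) n :
  (forall h d, 0 <= pol h d) -> (forall h, \sum_(d : decision K) pol h d = 1) ->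
  0 < eps < 1 / 2 -> (forall h, F h = 0 \/ F h = 1) ->
  1 / 2 * Wt pol (@th0 K) F n [::] + Wt pol (@th0 K) (ell j eps) n [::] <=
  Wt pol (thj j eps) F n [::].
Proof.
move=> p0 ps he F01.
have ell0 : ell j eps [::] = 0 by rewrite /ell big_nil.
have t01 : forall i, 0 <= (@th0 K) i <= 1 by move=> i; rewrite /th0; apply/andP; split; lra.
have tj01 : forall i, 0 <= thj j eps i <= 1.
  move=> i; rewrite /thj; case: ifP => _; apply/andP; split; move: he => /andP [? ?]; lra.
have Q : Wt pol (thj j eps) F n [::] = Wt pol (@th0 K) (fun h => F h * expR (ell j eps h)) n [::].
  by rewrite -(@com K pol j eps F n [::] he) ell0 expR0 mul1r.
have L1 : Wt pol (@th0 K) (fun h => expR (ell j eps h)) n [::] = 1.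
  have := @com K pol j eps (fun _ => 1) n [::] he.
  rewrite ell0 expR0 mul1r Wt_const // => ->.
  by apply: Wt_ext => h; rewrite mul1r.
set c := expR (1 / 2 : R) - 1.
have c0 : 0 <= c.
  have := expR_ge1Dx (1 / 2 : R); rewrite /c; lra.
have c1 : c <= 1 by have := expR_half_le2; rewrite /c; lra.
have Qge0 : 0 <= Wt pol (thj j eps) F n [::].
  apply: Wt_nonneg => // h; by case: (F01 h) => ->.
have main : Wt pol (@th0 K) (fun h => 1 / 2 * F h + (ell j eps h + (1 - expR (ell j eps h)))) n [::]
          <= Wt pol (@th0 K) (fun h => c * (F h * expR (ell j eps h))) n [::].
  apply: (@Wt_mono _ (fun _ => True)) => // e _ _.
  set l := ell j eps ([::] ++ e).
  have g1 := expR_ge1Dx l.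
  case: (F01 ([::] ++ e)) => ->.
    lra.
  have g2 := expR_ge1Dx (l + 1 / 2).
  rewrite expRD in g2.
  rewrite /c; nra.
rewrite Wt_scale -Q Wt_add Wt_scale Wt_add in main.
rewrite (@Wt_ext _ _ (fun h => 1 - expR (ell j eps h)) (fun h => 1 * (fun _ => 1) h + (-1) * (fun h => expR (ell j eps h)) h)) in main; last by move=> h; ring.
rewrite Wt_lin Wt_const // L1 in main.
nra.
Qed.

End More.


Section Inst.
Variables K m : nat.
Variable pol : policy K.
Hypothesis hpol : streaming_alg m pol.
Implicit Types (h e : history K).

Let p0 : forall h d, 0 <= pol h d. Proof. by case: hpol. Qed.
Let ps : forall h, \sum_(d : decision K) pol h d = 1. Proof. move: hpol => [_ [b _]]; exact: b. Qed.
Let pres : forall h d r, valid_hist m h -> 0 < pol h d -> valid_hist m (rcons h (d, r)).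
Proof. move=> h d r vh pos; exact: (@valid_pres K m pol h d r hpol vh pos). Qed.

Lemma in_last (T : eqType) (s : seq T) x : x \in rcons s x.
Proof. by rewrite mem_rcons mem_head. Qed.

Lemma last_rcons_state h d r :
  last_state 0 set0 (rcons h (d, r)) = (dpos d, dmem d).
Proof. by rewrite /last_state foldl_rcons. Qed.

Lemma tau_ext k h d r e :
  valid_hist m (rcons h (d, r)) -> (k < dpos d)%N ->
  valid_hist m (rcons h (d, r) ++ e) ->
  tau k (rcons h (d, r) ++ e) = tau k (rcons h (d, r)).
Proof.
move=> v1 kd v2.
rewrite /tau cnt_cat.
suff -> : cnt (fun d0 : decision K => (dpos d0 <= k)%N) e = 0 by rewrite addr0.
move: v2; rewrite /valid_hist valid_cat => /andP [_].
rewrite last_rcons_state /= => ve.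
have hA : forall y, y \in dmem d -> (y < dpos d)%N.
  have [a _ _] := valid_inv0 v1 (in_last h (d, r)).
  exact: a.
have := valid_inv ve hA.
rewrite /cnt => hx; rewrite big_seq; apply: big1 => x xe.
have [_ _ c] := hx x xe.
by rewrite leqNgt (leq_trans kd c).
Qed.

Lemma tau_rcons k h d r :
  tau k (rcons h (d, r)) = tau k h + (if (dpos d <= k)%N then 1 else 0).
Proof. by rewrite /tau /cnt big_rcons. Qed.

Lemma prefix_eq (k : nat) (th th' : 'I_K -> R) n h :
  (forall i : 'I_K, (i < k)%N -> th i = th' i) ->
  (forall i, 0 <= th i <= 1) -> (forall i, 0 <= th' i <= 1) ->
  valid_hist m h ->
  Wt pol th (tau k) n h = Wt pol th' (tau k) n h.
Proof.
move=> eth t01 t01'; elim: n h => [|n IH] h vh //=.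
apply: eq_bigr => d _.
have := p0 h d; rewrite le_eqVlt => /orP [/eqP <-|pos]; first by rewrite !mul0r.
congr (_ * _).
have v1 := pres 1 vh pos; have v0 := pres 0 vh pos.
case: (leqP (dpos d) k) => dk.
  have [a b _] := valid_inv0 v1 (in_last h (d, 1)).
  have pk : (dpull d < k)%N by apply: leq_trans (a _ b) dk.
  by rewrite (eth _ pk) !IH.
have cst : forall th2 r, (forall i, 0 <= th2 i <= 1) -> valid_hist m (rcons h (d, r)) ->
    Wt pol th2 (tau k) n (rcons h (d, r)) = tau k h.
  move=> th2 r t2 vr.
  rewrite (@Wt_eq_on _ (valid_hist m) pol th2 (tau k) (fun _ => tau k (rcons h (d, r))) n) //.
    by rewrite Wt_const // tau_rcons leqNgt dk addr0.
  by move=> e _ ve; apply: tau_ext.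
by rewrite !cst //; ring.
Qed.

Definition thS (k : 'I_K) : 'I_K -> R := fun i => if i == k then 1 else 1 / 2.

Lemma regS (k : 'I_K) T :
  1 / 2 * Wt pol (@th0 K) (tau k) T [::] <=
  exp_regret_from pol (fun i => Ber (thS k i)) 1 T [::].
Proof.
have := regret_W (fun i => thS k i) 1 T [::] ps; rewrite big_nil addr0 => ->.
have tS : forall i, 0 <= thS k i <= 1 by move=> i; rewrite /thS; case: ifP => _; apply/andP; split; lra.
have t0 : forall i, 0 <= (@th0 K) i <= 1 by move=> i; rewrite /th0; apply/andP; split; lra.
rewrite -(@prefix_eq k (thS k)) //; last first.
  by move=> i ik; rewrite /thS /th0; case: eqP => // ei; move: ik; rewrite ei ltnn.
rewrite -Wt_scale.
apply: (@Wt_mono _ (valid_hist m)) => // e _ ve.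
rewrite /tau /cnt mulr_sumr !big_seq; apply: ler_sum => x xe.
have [a b _] := valid_inv0 ve xe.
have pl := a _ b.
case: (leqP (dpos x.1) k) => dk.
  have : dpull x.1 != k by rewrite neq_ltn (leq_trans pl dk).
  by rewrite /thS => /negbTE ->; lra.
by have := tS (dpull x.1); move=> /andP [_ ?]; lra.
Qed.

Lemma cost_A (j : 'I_K) eps e :
  \sum_(x <- e) (1 / 2 + eps - thj j eps (dpull x.1)) = eps * ((size e)%:R - Nj j e).
Proof.
elim: e => [|x e IH]; first by rewrite /Nj /cnt !big_nil /= subr0 mulr0.
rewrite big_cons IH /Nj /cnt big_cons /= -/(cnt _ e) /thj.
case: ifP => _; rewrite -natr1; ring.
Qed.

Lemma cnt_le_size (P : decision K -> bool) e : cnt P e <= (size e)%:R.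
Proof.
elim: e => [|x e IH]; first by rewrite /cnt big_nil.
rewrite /cnt big_cons -/(cnt P e) /= -natr1.
by case: ifP => _; lra.
Qed.

Lemma regA (j : 'I_K) eps (H : nat) (L : R) T :
  0 < eps < 1 / 2 -> L <= T%:R ->
  eps * (T%:R - L) * Wt pol (thj j eps) (Find H L j) T [::] <=
  exp_regret_from pol (fun i => Ber (thj j eps i)) (1 / 2 + eps) T [::].
Proof.
move=> /andP [e0 e1] LT.
have := regret_W (fun i => thj j eps i) (1 / 2 + eps) T [::] ps; rewrite big_nil addr0 => ->.
have tj : forall i, 0 <= thj j eps i <= 1.
  by move=> i; rewrite /thj; case: ifP => _; apply/andP; split; lra.
rewrite -Wt_scale.
apply: (@Wt_mono _ (fun _ => True)) => // e se _.
rewrite cost_A /= se.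
have := cnt_le_size (fun d => dpull d == j) e; rewrite se -/(Nj j e) => hN.
rewrite /Find; case: ifP => [/andP [_ hl]|_]; nra.
Qed.

Lemma ln_bound (eps : R) : 0 < eps <= 1 / 8 ->
  - 6 * eps ^+ 2 <= ln (1 + 2 * eps) + ln (1 - 2 * eps).
Proof.
move=> /andP [e0 e1].
have a0 : 0 < 1 + 2 * eps by lra.
have b0 : 0 < 1 - 2 * eps by lra.
rewrite -lnM ?posrE //.
set y := (1 + 2 * eps) * (1 - 2 * eps).
have y0 : 0 < y by rewrite /y mulr_gt0.
have hy : y = 1 - 4 * eps ^+ 2 by rewrite /y; ring.
have h1 : ln (1 + (y^-1 - 1)) <= y^-1 - 1.
  apply: le_ln1Dx; have : 0 < y^-1 by rewrite invr_gt0.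
  lra.
rewrite addrC subrK lnV ?posrE // in h1.
have hinv : y^-1 <= 1 + 6 * eps ^+ 2.
  rewrite -(ler_pM2l y0) mulfV ?gt_eqF // hy.
  have : 0 <= eps ^+ 2 <= 1 / 64 by apply/andP; split; [exact: sqr_ge0 | rewrite expr2; nra].
  nra.
lra.
Qed.

Lemma stopA (j : 'I_K) eps (H : nat) (L : R) T (d0 : decision K) :
  dpull d0 != j -> 0 < eps <= 1 / 8 -> 0 <= L ->
  1 / 2 * Wt pol (@th0 K) (Find H L j) T [::] - 3 * eps ^+ 2 * (L + 1) <=
  Wt pol (thj j eps) (Find H L j) T [::].
Proof.
move=> dj he L0.
have he' : 0 < eps < 1 / 2 by move: he => /andP [? ?]; apply/andP; split; lra.
have hkl := ln_bound he.
have hF : forall h', Find H L j h' != 0 -> Nj j h' < L.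
  by move=> h'; rewrite /Find; case: ifP => [/andP [_ ->]|_] //; rewrite eqxx.
rewrite (@stop_eq K pol (@th0 K) j L d0 _ T [::] hF).
rewrite (@stop_eq K pol (thj j eps) j L d0 _ T [::] hF).
have F01 : forall h, Find H L j h = 0 \/ Find H L j h = 1.
  by move=> h; rewrite /Find; case: ifP; [right | left].
have c := @com_ineq K (pstop pol j L d0) j eps (Find H L j) T
   (@pstop_ge0 K pol j L d0 p0) (@pstop_sum K pol j L d0 ps) he' F01.
have N0 : Nj j [::] = 0 by rewrite /Nj /cnt big_nil.
have E0 : ell j eps [::] = 0 by rewrite /ell big_nil.
have k := @kl_step K pol j eps L d0 T [::] dj he' p0 ps hkl.
rewrite N0 E0 in k.
have := k ltac:(lra).
lra.
Qed.

Lemma sum_lt (H : nat) : (H <= K)%N ->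
  \sum_(j < K | (j < H)%N) (1 : R) = H%:R.
Proof.
move=> HK.
rewrite big_mkcond /=.
have e : forall j : 'I_K, (if (j < H)%N then 1 else 0 : R) = 1 - (if (H <= j)%N then 1 else 0).
  by move=> j; case: leqP => _; rewrite ?subr0 ?subrr.
rewrite (eq_bigr _ (fun j _ => e j)) sumrB sum_ind_ge sumr_const card_ord.
by rewrite -natrB ?leq_subr // subKn.
Qed.

Lemma sumF (H : nat) (L : R) T : 0 < L -> (0 < T)%N -> (H <= K)%N ->
  H%:R - (m.+1)%:R - Wt pol (@th0 K) (sigma H) T [::] / L <=
  \sum_(j < K | (j < H)%N) Wt pol (@th0 K) (Find H L j) T [::].
Proof.
move=> L0 T0 HK.
have t0 : forall i, 0 <= (@th0 K) i <= 1 by move=> i; rewrite /th0; apply/andP; split; lra.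
have := @Wt_mono K (valid_hist m) pol (@th0 K)
   (fun h => \sum_(j < K | (j < H)%N) (1 - Find H L j h))
   (fun h => (m.+1)%:R + sigma H h / L) T [::] p0 t0 pres erefl.
move=> /(_ _) hm.
have := hm (fun e se ve => @Find_sum K m H L _ L0 ve
                   ltac:(by rewrite /= -size_eq0 se -lt0n)).
rewrite Wt_sum.
rewrite (@Wt_ext K pol (@th0 K) _ (fun h => 1 * (fun _ => (m.+1)%:R) h + L^-1 * sigma H h) T [::]); last first.
  by move=> h; rewrite mul1r mulrC.
rewrite Wt_lin Wt_const //.
have ej : forall j : 'I_K, Wt pol (@th0 K) (fun h => 1 - Find H L j h) T [::] = 1 - Wt pol (@th0 K) (Find H L j) T [::].
  move=> j; rewrite (@Wt_ext K pol (@th0 K) _ (fun h => 1 * (fun _ => 1) h + (-1) * Find H L j h) T [::]); last by move=> h; ring.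
  by rewrite Wt_lin Wt_const // mul1r mulN1r.
rewrite (eq_bigr _ (fun j _ => ej j)) sumrB sum_lt // mul1r.
move=> hh; rewrite mulrC; lra.
Qed.

Lemma sumTau (H : nat) T : (H <= K)%N ->
  (K - H)%:R * Wt pol (@th0 K) (sigma H) T [::] <=
  \sum_(k < K) Wt pol (@th0 K) (tau k) T [::].
Proof.
move=> HK.
have t0 : forall i, 0 <= (@th0 K) i <= 1 by move=> i; rewrite /th0; apply/andP; split; lra.
rewrite -Wt_scale -Wt_sum.
apply: (@Wt_mono _ (fun _ => True)) => // e _ _.
exact: sum_tau.
Qed.

End Inst.


Lemma exp_regret_ext K (pol : policy K) (nu nu' : 'I_K -> rdist) mus n h :
  (forall i, nu i = nu' i) ->
  exp_regret_from pol nu mus n h = exp_regret_from pol nu' mus n h.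
Proof.
move=> e; elim: n h => [|n IH] h //=.
apply: eq_bigr => d _; rewrite e; congr (_ * (_ + _)).
by apply: eq_bigr => pv _; rewrite IH.
Qed.

Lemma bigmax_eq K (f : 'I_K -> R) (M : R) (i0 : 'I_K) :
  0 <= M -> (forall i, f i <= M) -> f i0 = M ->
  \big[Num.max/0]_(i < K) f i = M.
Proof.
move=> M0 fM fi0; apply/eqP; rewrite eq_le; apply/andP; split.
  by elim/big_ind: _ => // x y hx hy; rewrite ge_max hx hy.
by rewrite (bigD1 i0) //= le_max fi0 lexx.
Qed.

Lemma exists_d0 K (j : 'I_K) : (1 < K)%N -> exists d0 : decision K, dpull d0 != j.
Proof.
move=> K1.
have k0 : (0 < K)%N by apply: ltnW.
pose i0 : 'I_K := Ordinal k0. pose i1 : 'I_K := Ordinal K1.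
have ne : i0 != i1 by [].
case: (eqVneq j i0) => [ej|nj].
  by exists (ord0, set0, i1); rewrite /dpull /= ej eq_sym.
by exists (ord0, set0, i0); rewrite /dpull /= eq_sym.
Qed.

From mathcomp Require Import zify.

Lemma core K T m H (pol : policy K) (z : R) :
  streaming_alg m pol ->
  (20 <= K)%N -> H = (K %/ 2)%N -> m = (K %/ 20)%N -> 1 <= z -> T%:R = K%:R * z ^+ 3 ->
  K%:R * z ^+ 2 / 256 <=
  1 / (2 * K%:R) *
   (\sum_(j < K) exp_regret_from pol (fun i => Ber (thj j (1 / (8 * z)) i)) (1 / 2 + 1 / (8 * z)) T [::] +
    \sum_(k < K) exp_regret_from pol (fun i => Ber (thS k i)) 1 T [::]).
Proof.
move=> hpol K20 eH em z1 eT.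
have p0 : forall h d, 0 <= pol h d by case: hpol.
have ps : forall h, \sum_(d : decision K) pol h d = 1 by move: hpol => [_ [b _]].
set eps := 1 / (8 * z).
set L := z ^+ 2.
set Kr := (K%:R : R); set Tr := (T%:R : R).
have z0 : 0 < z by lra.
have Kr20 : 20 <= Kr by rewrite /Kr (ler_nat R 20 K).
have eps0 : 0 < eps by rewrite /eps divr_gt0 //; lra.
have eps8 : eps <= 1 / 8.
  rewrite /eps ler_pdivrMr ?mulr_gt0 //; lra.
have epsz : eps * z = 1 / 8.
  by rewrite /eps; field; rewrite gt_eqF.
have L1 : 1 <= L by rewrite /L expr2; nra.
have z3 : z <= z ^+ 3 by rewrite !exprS expr0 mulr1; nra.
have zL : L <= z ^+ 3 by rewrite /L !exprS expr0 mulr1; nra.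
have LT : L <= Tr / 2 by rewrite /Tr eT; nra.
have LT' : L <= Tr by lra.
have T0 : (0 < T)%N.
  rewrite -(ltr0n R) -/Tr; lra.
have HK : (H <= K)%N by rewrite eH; lia.
have nat1 : (H * 2 <= K <= H * 2 + 1)%N by rewrite eH; lia.
have nat2 : (m * 20 <= K)%N by rewrite em; lia.
set Hr := (H%:R : R); set mr := (m%:R : R).
have r1 : Hr * 2 <= Kr by rewrite /Hr /Kr -(natrM R H 2) ler_nat; case/andP: nat1.
have r2 : Kr <= Hr * 2 + 1 by rewrite /Hr /Kr -(natrM R H 2) natr1 ler_nat; case/andP: nat1 => _; rewrite addn1.
have r3 : mr * 20 <= Kr by rewrite /mr /Kr -(natrM R m 20) ler_nat.
set P := fun f => Wt pol (@th0 K) f T [::].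
set s := P (sigma H).
have s0 : 0 <= s.
  apply: Wt_nonneg => // [i|h]; first by rewrite /th0; apply/andP; split; lra.
  exact: cnt_ge0.
set A := eps * (Tr - L).
have A0 : 0 <= A by rewrite /A mulr_ge0 //; lra.
have Aeq : A = (Kr * z ^+ 2 - z) / 8.
  by rewrite /A /Tr eT /L /eps; field; rewrite gt_eqF.
set c3 := 3 * eps ^+ 2 * (L + 1).
have c3b : c3 <= 6 / 64.
  rewrite /c3 /L; have : eps ^+ 2 * z ^+ 2 = 1 / 64 by rewrite -exprMn epsz; field.
  nra.
have Q : forall j : 'I_K, A * (1 / 2 * P (Find H L j) - c3) <=
    exp_regret_from pol (fun i => Ber (thj j eps i)) (1 / 2 + eps) T [::].
  move=> j.
  have [d0 dj] := exists_d0 j (leq_trans (isT : (2 <= 20)%N) K20).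
  have he : 0 < eps < 1 / 2 by apply/andP; split; lra.
  apply: le_trans (regA hpol j H he LT').
  apply: ler_wpM2l => //.
  exact: (stopA hpol H T dj (ltac:(apply/andP; split; lra) : 0 < eps <= 1/8) (ltac:(lra) : 0 <= L)).
have Q0 : forall j : 'I_K, 0 <= exp_regret_from pol (fun i => Ber (thj j eps i)) (1 / 2 + eps) T [::].
  move=> j; apply: le_trans (regA hpol j H _ LT'); last by apply/andP; split; lra.
  apply: mulr_ge0 => //; apply: Wt_nonneg => //.
    by move=> i; rewrite /thj; case: ifP => _; apply/andP; split; lra.
  by move=> h; rewrite /Find; case: ifP.
have RA : A * (1 / 2 * \sum_(j < K | (j < H)%N) P (Find H L j) - c3 * Hr) <=
    \sum_(j < K) exp_regret_from pol (fun i => Ber (thj j eps i)) (1 / 2 + eps) T [::].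
  have RA1 : \sum_(j < K | (j < H)%N) exp_regret_from pol (fun i => Ber (thj j eps i)) (1 / 2 + eps) T [::]
      <= \sum_(j < K) exp_regret_from pol (fun i => Ber (thj j eps i)) (1 / 2 + eps) T [::].
    rewrite [X in _ <= X](bigID (fun j : 'I_K => (j < H)%N)) /= lerDl.
    by apply: sumr_ge0 => j _; apply: Q0.
  apply: le_trans RA1; apply: le_trans (ler_sum _ (fun j _ => Q j)).
  have ec : \sum_(j < K | (j < H)%N) c3 = c3 * Hr.
    by rewrite /Hr -(sum_lt HK) mulr_sumr; apply: eq_bigr => j _; rewrite mulr1.
  by rewrite -mulr_sumr sumrB -mulr_sumr ec.
have RS : 1 / 2 * ((K - H)%:R * s) <=
    \sum_(k < K) exp_regret_from pol (fun i => Ber (thS k i)) 1 T [::].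
  apply: le_trans (ler_sum _ (fun k _ => regS hpol k T)).
  rewrite -mulr_sumr; apply: ler_wpM2l; first lra.
  exact: (sumTau hpol T HK).
have SF := sumF hpol (ltac:(lra) : 0 < L) T0 HK.
rewrite -/P -/s -/Hr -natr1 -/mr in SF.
rewrite natrB // -/Kr -/Hr in RS.
set SP := \sum_(j < K | (j < H)%N) P (Find H L j) in RA SF.
set RAs := \sum_(j < K) _ in RA *.
set RSs := \sum_(k < K) _ in RS *.
have Hr0 : 0 <= Hr by rewrite /Hr ler0n.
have L0 : 0 < L by lra.
have c3H : c3 * Hr <= 6 / 64 * Hr by apply: ler_wpM2r.
set X := 1 / 2 * (Hr - mr - 1) - c3 * Hr.
have X8 : Kr / 8 <= X by rewrite /X; lra.
have sL0 : 0 <= s / (2 * L) by rewrite divr_ge0 //; lra.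
have e1 : 1 / 2 * SP - c3 * Hr >= X - s / (2 * L).
  have : s / (2 * L) = 1 / 2 * (s / L) by field; rewrite gt_eqF.
  have SF2 : Hr - (mr + 1) - s / L <= SP by exact: SF.
  move=> ->; rewrite /X; lra.
have e2 : A * (X - s / (2 * L)) <= A * (1 / 2 * SP - c3 * Hr) by apply: ler_wpM2l.
have AU : A <= Kr * L / 8 by rewrite Aeq /L; lra.
have AL : Kr * L / 16 <= A by rewrite Aeq /L; nra.
have e3 : A * (s / (2 * L)) <= Kr * L / 8 * (s / (2 * L)) by apply: ler_wpM2r.
have e4 : Kr * L / 8 * (s / (2 * L)) = Kr * s / 16 by field; rewrite gt_eqF.
have e5 : Kr * L / 16 * (Kr / 8) <= A * X.
  apply: ler_pM => //; rewrite ?divr_ge0 ?mulr_ge0 //; lra.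
have e6 : Kr / 2 * s <= (Kr - Hr) * s by apply: ler_wpM2r => //; lra.
have tot : Kr * L / 16 * (Kr / 8) <= RAs + RSs.
  have : A * (X - s / (2 * L)) = A * X - A * (s / (2 * L)) by ring.
  have : Kr / 2 * s = 2 * (Kr * s / 16) + Kr * s / 16 * 6 by field.
  nra.
have Kp : 0 < Kr by lra.
apply: le_trans (_ : 1 / (2 * Kr) * (Kr * L / 16 * (Kr / 8)) <= _).
  by rewrite le_eqVlt; apply/orP; left; apply/eqP; field; rewrite gt_eqF.
apply: ler_wpM2l => //; rewrite divr_ge0 //; lra.
Qed.

Definition AI K (eps : R) (j : 'I_K) : instance K := [ffun i => Ber (thj j eps i)].
Definition SI K (k : 'I_K) : instance K := [ffun i => Ber (thS k i)].
Definition DistI K (eps : R) : instance_dist K :=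
  [seq (1 / (2 * K%:R), AI eps j) | j <- enum 'I_K] ++
  [seq (1 / (2 * K%:R), SI k) | k <- enum 'I_K].

Lemma Ber_rdist p : 0 <= p <= 1 -> is_rdist (Ber p).
Proof.
move=> /andP [p0 p1]; split; last by rewrite /Ber !big_cons big_nil /=; ring.
move=> pv; rewrite !inE => /orP [/eqP ->|/eqP ->] /=; split; lra.
Qed.

Lemma sum_enum K (F : 'I_K -> R) : \sum_(x <- Finite.enum 'I_K) F x = \sum_(x < K) F x.
Proof. by rewrite /index_enum unlock. Qed.

Lemma Dist_ok K eps : (0 < K)%N -> 0 <= eps <= 1 / 2 -> is_instance_dist (DistI K eps).
Proof.
move=> K0 /andP [e0 e1]; have Kp : 0 < (K%:R : R) by rewrite ltr0n.
split.
  move=> wn; rewrite mem_cat => /orP [] /mapP [x _ ->] /=;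
   (split; first by rewrite divr_ge0 //; lra); move=> i; rewrite ffunE; apply: Ber_rdist.
    by rewrite /thj; case: ifP => _; apply/andP; split; lra.
  by rewrite /thS; case: ifP => _; apply/andP; split; lra.
rewrite big_cat !big_map !sum_enum /= !sumr_const card_ord.
rewrite -mulr_natr; field; rewrite gt_eqF //.
Qed.

Lemma perm_eq_inv K (s : {perm 'I_K}) (i j : 'I_K) : (s i == j) = (i == (s^-1)%g j).
Proof. by rewrite (canF_eq (permK s)). Qed.

Lemma fixed_eq K (pol : policy K) eps (s : {perm 'I_K}) T :
  (0 < K)%N -> 0 <= eps <= 1 / 2 ->
  regret_fixed_order pol (DistI K eps) s T =
  1 / (2 * K%:R) *
   (\sum_(j < K) exp_regret_from pol (fun i => Ber (thj j eps i)) (1 / 2 + eps) T [::] +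
    \sum_(k < K) exp_regret_from pol (fun i => Ber (thS k i)) 1 T [::]).
Proof.
move=> K0 /andP [e0 e1].
rewrite /regret_fixed_order big_cat !big_map !sum_enum /= -!mulr_sumr -mulrDr.
congr (_ * (_ + _)).
  rewrite [RHS](reindex_inj (@perm_inj _ (s^-1)%g)) /=.
  apply: eq_bigr => j _; rewrite /exp_regret_order.
  have -> : best_mean (AI eps j) = 1 / 2 + eps.
    apply: (@bigmax_eq _ _ _ j); first lra.
      by move=> i; rewrite /AI ffunE rmean_Ber /thj; case: ifP => _; lra.
    by rewrite /AI ffunE rmean_Ber /thj eqxx.
  apply: exp_regret_ext => i; rewrite /AI ffunE /thj perm_eq_inv //.
rewrite [RHS](reindex_inj (@perm_inj _ (s^-1)%g)) /=.
apply: eq_bigr => k _; rewrite /exp_regret_order.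
have -> : best_mean (SI k) = 1.
  apply: (@bigmax_eq _ _ _ k); first lra.
    by move=> i; rewrite /SI ffunE rmean_Ber /thS; case: ifP => _; lra.
  by rewrite /SI ffunE rmean_Ber /thS eqxx.
apply: exp_regret_ext => i; rewrite /SI ffunE /thS perm_eq_inv //.
Qed.

Lemma avg_ge (I : finType) (F : I -> R) (B : R) :
  (0 < #|I|)%N -> (forall i, B <= F i) -> B <= (#|I|%:R)^-1 * \sum_i F i.
Proof.
move=> I0 hB.
have n0 : 0 < (#|I|%:R : R) by rewrite ltr0n.
have := ler_sum (index_enum I) (fun i _ => hB i) (P := xpredT).
rewrite sumr_const => hs.
rewrite -(ler_pM2l n0) mulrA mulfV ?gt_eqF // mul1r mulr_natl.
exact: hs.
Qed.

Theorem theorem3p1 :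
  exists C : R, 0 < C /\
  forall K T : nat, (20 <= K)%N -> (K <= T)%N ->
  exists D : instance_dist K, is_instance_dist D /\
    (forall pol : policy K, streaming_alg (K %/ 20) pol ->
       exists s : {perm 'I_K},
         C * (K%:R `^ (1 / 3)) * (T%:R `^ (2 / 3)) <= regret_fixed_order pol D s T) /\
    (forall pol : policy K, streaming_alg (K %/ 20) pol ->
       C * (K%:R `^ (1 / 3)) * (T%:R `^ (2 / 3)) <= regret_random_order pol D T).
Proof.
exists (1 / 256); split; first lra.
move=> K T K20 KT.
have K0 : (0 < K)%N by apply: leq_trans K20.
set Kr := (K%:R : R); set Tr := (T%:R : R).
have Kp : 0 < Kr by rewrite /Kr ltr0n.
have KTr : Kr <= Tr by rewrite /Kr /Tr ler_nat.
have q0 : 0 <= Tr / Kr by rewrite divr_ge0 //; lra.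
have q1 : 1 <= Tr / Kr by rewrite ler_pdivlMr // mul1r.
set z := (Tr / Kr) `^ (1 / 3).
have z0 : 0 <= z by apply: powR_ge0.
have z3 : z ^+ 3 = Tr / Kr.
  rewrite /z -powR_mulrn ?powR_ge0 // -powRrM.
  rewrite (_ : 1 / 3 * 3%:R = 1); last by field.
  by rewrite powRr1.
have z1 : 1 <= z.
  case: (lerP 1 z) => // zl.
  have : z ^+ 3 < 1 by rewrite !exprS expr0 mulr1; nra.
  lra.
have eT : Tr = Kr * z ^+ 3 by rewrite z3; field; rewrite gt_eqF.
have target : 1 / 256 * Kr `^ (1 / 3) * Tr `^ (2 / 3) = Kr * z ^+ 2 / 256.
  have e1 : Tr `^ (2 / 3) = Kr `^ (2 / 3) * z ^+ 2.
    have -> : Tr = Kr * (Tr / Kr) by field; rewrite gt_eqF.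
    rewrite powRM; [| lra | exact: q0].
    congr (_ * _).
    rewrite /z -powR_mulrn ?powR_ge0 // -powRrM.
    by rewrite (_ : 1 / 3 * 2%:R = 2 / 3) //; field.
  rewrite e1 mulrA -(mulrA (1 / 256)) -powRD; last by apply/implyP => h; rewrite gt_eqF.
  rewrite (_ : 1 / 3 + 2 / 3 = 1); last by field.
  rewrite powRr1; last lra.
  by field.
have eps01 : 0 <= 1 / (8 * z) <= 1 / 2.
  have p8 : 0 < 8 * z by lra.
  apply/andP; split; first by rewrite divr_ge0 //; lra.
  by rewrite ler_pdivrMr //; lra.
exists (@DistI K (1 / (8 * z))). split; first exact: (Dist_ok K0 eps01).
have per : forall pol : policy K, streaming_alg (K %/ 20) pol -> forall s : {perm 'I_K},
    Kr * z ^+ 2 / 256 <= regret_fixed_order pol (@DistI K (1 / (8 * z))) s T.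
  move=> pol hp s; rewrite fixed_eq //.
  exact: (core hp K20 erefl erefl z1 eT).
rewrite target; split.
  by move=> pol hp; exists 1%g; apply: per.
move=> pol hp; rewrite /regret_random_order.
set c := (#|{perm 'I_K}|%:R : R)^-1.
rewrite (eq_bigr (fun wn => c * \sum_(s : {perm 'I_K}) wn.1 * exp_regret_order pol wn.2 s T)); last first.
  by move=> wn _; rewrite mulrCA mulr_sumr.
rewrite -mulr_sumr exchange_big /=.
have cp : (0 < #|{perm 'I_K}|)%N by apply/card_gt0P; exists 1%g.
have cpr : 0 < (#|{perm 'I_K}|%:R : R) by rewrite ltr0n.
by apply: avg_ge => // s; apply: per.
Qed.
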